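(* If $T$ is a tree of order $n\geq 3$, then ${\chi^\Sigma_g}^\star(T)\leq 4$.
   Context: For an Abelian group $\mathcal{G}$ with identity $0$ and $f\colon E(T)\to\mathcal{G}$, $w_f(v)=\sum_{u\in N(v)}f(uv)$. ${\chi^\Sigma_g}^\star(T)$ is the least positive integer $k$ such that for every Abelian group $\mathcal{G}$ of order $k$ there exists $f\colon E(T)\to\mathcal{G}\setminus\{0\}$ with $w_f(u)\neq w_f(v)$ for every edge $uv$. *)

(* Defs.v *)
From HB Require Import structures.
From mathcomp Require Import all_boot all_order all_algebra.
Set Implicit Arguments. Unset Strict Implicit. Unset Printing Implicit Defensive.
Import GRing.Theory.
Local Open Scope ring_scope.

Definition simple_graph (T : finType) (e : rel T) : Prop :=
  symmetric e /\ irreflexive e.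

Definition connected_graph (T : finType) (e : rel T) : Prop :=
  forall x y : T, connect e x y.

Definition acyclic_graph (T : finType) (e : rel T) : Prop :=
  forall p : seq T, uniq p -> (3 <= size p)%N -> ~~ cycle e p.

Definition is_tree (T : finType) (e : rel T) : Prop :=
  [/\ simple_graph e, connected_graph e & acyclic_graph e].

(* Edge labelings are functions on 2-subsets {u,v}; only their values on
   edges matter. w_f(v) = sum of f(uv) over neighbours u of v. *)
Definition weight (T : finType) (e : rel T) (G : zmodType)
  (f : {set T} -> G) (v : T) : G :=
  \sum_(u | e v u) f [set u; v].

Definition good_labeling_exists (T : finType) (e : rel T) (G : zmodType) : Prop :=
  exists f : {set T} -> G,
    (forall u v, e u v -> f [set u; v] != 0) /\
    (forall u v, e u v -> weight e f u != weight e f v).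

(* The defining property of chi^Sigma_g*(T) at order k: for every Abelian
   group G of order k there is such a labeling. *)
Definition group_sum_good (T : finType) (e : rel T) (k : nat) : Prop :=
  forall G : finZmodType, #|G| = k -> good_labeling_exists e G.

(* Main.v *)
Require Import Defs.
From mathcomp Require Import all_boot all_order all_algebra.
From Stdlib Require Import Classical.
From mathcomp Require Import zify.
Set Implicit Arguments. Unset Strict Implicit. Unset Printing Implicit Defensive.
Import GRing.Theory.
Local Open Scope ring_scope.


Lemma set2_eqE (T : finType) (u v a b : T) : a != b ->
  ([set u; v] == [set a; b]) = ((u == a) && (v == b)) || ((u == b) && (v == a)).
Proof.
move=> nab; apply/eqP/idP.
  move=> E.
  have ha : a \in [set u; v] by rewrite E !inE eqxx.
  have hb : b \in [set u; v] by rewrite E !inE eqxx orbT.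
  rewrite !inE in ha hb.
  case/orP: ha => /eqP ha; case/orP: hb => /eqP hb; subst.
  - by rewrite eqxx in nab.
  - by rewrite !eqxx.
  - by rewrite !eqxx orbT.
  - by rewrite eqxx in nab.
by case/orP=> /andP[/eqP -> /eqP ->] //; rewrite setUC.
Qed.

Definition bumpf (T : finType) (G : zmodType) (a b : T) (y : G) : {set T} -> G :=
  fun S => if S == [set a; b] then y else 0.

Lemma weight_add (T : finType) (e : rel T) (G : zmodType) (f g : {set T} -> G) v :
  weight e (fun S => f S + g S) v = weight e f v + weight e g v.
Proof. by rewrite /weight big_split. Qed.

Lemma weight_bumpf (T : finType) (e : rel T) (G : zmodType) (a b : T) (y : G) v :
  symmetric e -> e a b -> a != b ->
  weight e (bumpf a b y) v = (if v == a then y else 0) + (if v == b then y else 0).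
Proof.
move=> es eab nab; rewrite /weight /bumpf.
under eq_bigr => u _ do rewrite set2_eqE //.
have [->|nva] := eqVneq v a.
  rewrite (negbTE nab) /= (bigD1 b) //= ?eqxx ?andbF ?andbT ?orbT ?orbF ?addr0 big1 ?addr0 //.
  by move=> u /andP[_ /negbTE ->]; rewrite !andbF.
have [->|nvb] := eqVneq v b.
  rewrite /= (bigD1 a) ?(es b a) //= ?eqxx ?andbF ?andbT ?orbT ?orbF ?add0r big1 ?addr0 //.
  by move=> u /andP[_ /negbTE ->]; rewrite !andbF.
by rewrite big1 ?addr0 // => u _; rewrite ?(negbTE nva) ?(negbTE nvb) ?andbF.
Qed.

Lemma avoid3 (G : finType) (a b c : G) : (3 < #|G|)%N ->
  exists w, [/\ w != a, w != b & w != c].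
Proof.
move=> h; case: (pickP [pred w | [&& w != a, w != b & w != c]]).
  by move=> w /and3P[*]; exists w.
move=> H; have : (#|G| <= #|[:: a; b; c]|)%N.
  apply: subset_leq_card; apply/subsetP => w _.
  by move: (H w) => /=; rewrite !inE; case: eqP; case: eqP; case: eqP.
by move=> /leq_trans /(_ (card_size _)); rewrite leqNgt h.
Qed.

Lemma good_y0 (G : finZmodType) (x : G) (n : nat) : #|G| = 4%N -> x != 0 ->
  exists y0 : G, y0 != 0 /\ x + y0 *+ n != 0.
Proof.
move=> hG nx.
have h3 : (3 < #|G|)%N by rewrite hG.
have [y [ny _ _]] := avoid3 0 0 0 h3.
have [y' [ny' yy']] : exists y', y' != 0 /\ y + y' != 0.
  have [yy|yy] := eqVneq (y + y) 0; last by exists y.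
  have [w [nw0 nwy _]] := avoid3 0 y y h3.
  exists w; split=> //; apply/negP=> /eqP E.
  move/eqP: nwy; apply; apply: (addrI y); rewrite E yy //.
have [A|A] := eqVneq (x + y *+ n) 0; last by exists y.
have [B|B] := eqVneq (x + y' *+ n) 0; last by exists y'.
exists (y + y'); split=> //.
move/eqP: A; rewrite addrC addr_eq0 => /eqP A.
move/eqP: B; rewrite addrC addr_eq0 => /eqP B.
by rewrite mulrnDl A B addrA subrr add0r oppr_eq0.
Qed.

Lemma group_step (G : finZmodType) (x F : G) (n : nat) : #|G| = 4%N -> x != 0 ->
  exists y0 z : G, [/\ y0 != 0, z != 0, x + y0 *+ n + z != F,
     x + y0 *+ n + z != y0 & x + y0 *+ n + z != z].
Proof.
move=> hG nx; have [y0 [ny0 hR]] := good_y0 n hG nx.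
have h3 : (3 < #|G|)%N by rewrite hG.
have [W [h1 h2 h3']] := avoid3 F y0 (x + y0 *+ n) h3.
exists y0, (W - (x + y0 *+ n)); rewrite [_ + (W - _)]addrC subrK; split=> //.
  by rewrite subr_eq0.
apply: contra hR => /eqP E.
have : W - (W - (x + y0 *+ n)) == 0 by rewrite -E subrr.
by rewrite opprB addrC subrK.
Qed.

Lemma chord (T : finType) (e : rel T) : symmetric e -> acyclic_graph e ->
  forall x s u, uniq (x :: s) -> path e x s -> u \in s -> e x u -> u = head x s.
Proof.
move=> es acyc x s u us ps us' exu.
have hi := us'; rewrite -index_mem in hi.
case Ei: (index u s) => [|i].
  by rewrite -nth0 -Ei nth_index.
have ts : take i.+2 s = rcons (take i.+1 s) u.
  by rewrite (take_nth x) -?Ei ?nth_index.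
have Hc : cycle e (x :: take i.+2 s).
  rewrite /cycle rcons_path; apply/andP; split.
    exact: take_path.
  by rewrite ts last_rcons es.
have Hs : (3 <= size (x :: take i.+2 s))%N by rewrite /= size_takel // -Ei.
have Hu : uniq (x :: take i.+2 s).
  rewrite /=; move: us => /= /andP[xs us]; rewrite take_uniq // andbT.
  by apply: contra xs; apply: mem_take.
by move: (acyc _ Hu Hs); rewrite Hc.
Qed.


Definition validp (T : finType) (e : rel T) (A : {set T}) (x : T) (s : seq T) :=
  [&& uniq (x :: s), path e x s & all (fun v => v \in A) (x :: s)].

Definition maxp (T : finType) (e : rel T) (A : {set T}) (x : T) (s : seq T) :=
  validp e A x s /\ forall y t, validp e A y t -> (size t <= size s)%N.

Lemma validp_size (T : finType) (e : rel T) A x s : validp e A x s -> (size s < #|T|)%N.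
Proof.
case/and3P=> /card_uniqP h _ _; have := max_card (mem (x :: s)).
by rewrite h.
Qed.

Lemma max_path_ex (T : finType) (e : rel T) A x s : validp e A x s ->
  exists y t, maxp e A y t.
Proof.
move: {2}(#|T| - size s)%N (leqnn (#|T| - size s)%N) => k.
elim: k x s => [|k IH] x s hk hv.
  by move: (validp_size hv); rewrite -subn_gt0; move: hk; rewrite leqn0 => /eqP ->.
case: (classic (forall y t, validp e A y t -> (size t <= size s)%N)) => H.
  by exists x, s.
apply: NNPP => nH; apply: H => y t hv'; apply: NNPP => hlt.
apply: nH; apply: (IH y t) => //.
have := validp_size hv'; have := validp_size hv; move/negP: hlt; rewrite -ltnNge => hlt.
move: hk hlt; clear; lia.
Qed.

Definition leafA (T : finType) (e : rel T) (A : {set T}) (u c : T) :=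
  forall w, w \in A -> e u w -> w = c.

Lemma max_leaf (T : finType) (e : rel T) : symmetric e -> irreflexive e ->
  acyclic_graph e -> forall A x s, maxp e A x s ->
  forall u, u \in A -> e x u -> u = head x s.
Proof.
move=> es ei acyc A x s [hv hm] u uA exu.
case/and3P: hv => hu hp ha.
have [us|nus] := boolP (u \in s); first exact: chord hu hp us exu.
have [ux|nux] := eqVneq u x; first by rewrite ux ei in exu.
have : validp e A u (x :: s).
  apply/and3P; split.
  - by rewrite cons_uniq hu inE negb_or nux nus.
  - by rewrite /= es exu hp.
  - by rewrite /= uA.
by move/hm; rewrite /= ltnn.
Qed.

Lemma structure (T : finType) (e : rel T) : symmetric e -> irreflexive e ->
  acyclic_graph e -> forall (A : {set T}) a b, a \in A -> b \in A -> e a b ->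
  exists c l0 p, [/\ c \in A, l0 \in A, e c l0, leafA e A l0 c &
     forall u, u \in A -> e c u -> u = p \/ leafA e A u c].
Proof.
move=> es ei acyc A a b aA bA eab.
have hv : validp e A a [:: b].
  apply/and3P; split; rewrite /= ?eab ?aA ?bA //.
  by rewrite inE andbT; apply: contraTneq eab => ->; rewrite ei.
have [x [s hmax]] := max_path_ex hv.
have hs : (1 <= size s)%N by have := hmax.2 _ _ hv.
case: s hs hmax => // c s' _ hmax.
have hmax' := hmax; case: hmax' => hv' hm.
case/and3P: (hv') => hu hp ha.
move: hp => /= /andP[exc hp'].
move: ha => /= /and3P[xA cA ha'].
exists c, x, (head c s'); split => //.
- by rewrite es.
- by move=> w wA exw; exact: (max_leaf es ei acyc hmax wA exw).
move=> u uA ecu.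
have [us|nus] := boolP (u \in s').
  left; apply: (chord es acyc _ hp' us ecu).
  by move: hu => /= /andP[_].
have [ux|nux] := eqVneq u x.
  by right; rewrite ux => w wA exw; exact: (max_leaf es ei acyc hmax wA exw).
right.
have [uc|nuc] := eqVneq u c; first by rewrite uc ei in ecu.
have hv2 : validp e A u (c :: s').
  rewrite /validp /= es ecu hp' uA cA ha' !andbT; apply/andP; split.
    by rewrite inE negb_or nuc nus.
  by move: hu => /= /andP[_].
have hmax2 : maxp e A u (c :: s') by split => // y t /hm.
by move=> w wA euw; exact: (max_leaf es ei acyc hmax2 wA euw).
Qed.

Definition supp (T : finType) (e : rel T) (G : zmodType) (A : {set T}) (f : {set T} -> G) :=
  forall S, f S != 0 -> exists u v, [/\ S = [set u; v], u \in A, v \in A & e u v].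

Lemma f_out (T : finType) (e : rel T) (G : zmodType) A (f : {set T} -> G) u v :
  supp e A f -> u \notin A -> f [set u; v] = 0.
Proof.
move=> hs uA; apply/eqP; apply: contraNT uA => /hs [a [b [E aA bA _]]].
have : u \in [set u; v] by rewrite !inE eqxx.
by rewrite E !inE => /orP[] /eqP ->.
Qed.

Lemma weight_out (T : finType) (e : rel T) (G : zmodType) A (f : {set T} -> G) v :
  supp e A f -> v \notin A -> weight e f v = 0.
Proof.
move=> hs vA; rewrite /weight big1 // => u _.
by rewrite setUC; apply: f_out hs vA.
Qed.

Lemma weight_one (T : finType) (e : rel T) (G : zmodType) A (f : {set T} -> G) c p :
  supp e A f -> e c p -> (forall u, u \in A -> e c u -> u = p) ->
  weight e f c = f [set p; c].
Proof.
move=> hs ecp hn; rewrite /weight (bigD1 p) //= big1 ?addr0 // => u /andP[ecu nup].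
have [uA|uA] := boolP (u \in A); last exact: f_out hs uA.
by rewrite (hn u uA ecu) eqxx in nup.
Qed.

Lemma weight_sum (T : finType) (e : rel T) (G : zmodType) (L : {set T})
   (g : T -> {set T} -> G) v :
  weight e (fun S => \sum_(l in L) g l S) v = \sum_(l in L) weight e (g l) v.
Proof. by rewrite /weight exchange_big. Qed.

Lemma sum_if_eq (T : finType) (G : zmodType) (L : {set T}) (y : T -> G) v :
  \sum_(l in L) (if v == l then y l else 0) = if v \in L then y v else 0.
Proof.
case: ifP => vL.
  rewrite (bigD1 v) //= eqxx big1 ?addr0 // => l /andP[_ nlv].
  by rewrite eq_sym (negbTE nlv).
rewrite big1 // => l lL; case: eqP => // E; by rewrite E lL in vL.
Qed.

Definition goodA (T : finType) (e : rel T) (G : zmodType) (A : {set T}) (f : {set T} -> G) :=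
  [/\ supp e A f,
      forall u v, u \in A -> v \in A -> e u v -> f [set u; v] != 0 &
      forall u v, u \in A -> v \in A -> e u v -> weight e f u != weight e f v].

Lemma step (T : finType) (e : rel T) (G : finZmodType) : symmetric e -> irreflexive e ->
  #|G| = 4%N ->
  forall (A L : {set T}) (c p l1 : T) (f'' : {set T} -> G),
  L \subset A -> l1 \in L ->
  (forall l, l \in L -> e l c /\ leafA e A l c) ->
  c \in A -> c \notin L -> p \in A -> p \notin L -> e c p ->
  (forall u, u \in A -> e c u -> u = p \/ u \in L) ->
  supp e (A :\: L) f'' ->
  (forall u v, u \in A :\: L -> v \in A :\: L -> e u v -> f'' [set u; v] != 0) ->
  (forall u v, u \in A :\: L -> v \in A :\: L -> e u v -> u != c -> v != c ->
     weight e f'' u != weight e f'' v) ->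
  exists f : {set T} -> G, goodA e A f.
Proof.
move=> es ei hG A L c p l1 f'' LA l1L hleaf cA cL pA pL ecp hc hsupp hnz hw.
have LA' : forall l, l \in L -> l \in A by move=> l; apply: (subsetP LA).
have lc : forall l, l \in L -> l != c.
  by move=> l lL; apply: contraNneq cL => <-.
have cAL : c \in A :\: L by rewrite inE cL cA.
have pAL : p \in A :\: L by rewrite inE pL pA.
set x := f'' [set p; c].
have nx : x != 0 by apply: hnz => //; rewrite es.
set F := weight e f'' p.
set n := #|L :\ l1|.
have [y0 [z [ny0 nz hF hy0 hz]]] := group_step F n hG nx.
pose y := fun l => if l == l1 then z else y0.
have ny : forall l, y l != 0 by move=> l; rewrite /y; case: ifP.
have sumy : \sum_(l in L) y l = z + y0 *+ n.
  rewrite (bigD1 l1) //= /y eqxx; congr (_ + _).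
  rewrite (eq_bigr (fun _ => y0)); last by move=> l /andP[_ /negbTE ->].
  rewrite -sumr_const; apply: eq_bigl => l; by rewrite !inE andbC.
set W := x + y0 *+ n + z.
pose f := fun S : {set T} => f'' S + \sum_(l : T | l \in L) bumpf l c (y l) S.
have wf : forall v, weight e f v = weight e f'' v +
     ((if v \in L then y v else 0) + (if v == c then \sum_(l in L) y l else 0)).
  move=> v; rewrite /f weight_add weight_sum; congr (_ + _).
  rewrite (eq_bigr (fun l => (if v == l then y l else 0) + (if v == c then y l else 0))).
    rewrite big_split /= sum_if_eq; congr (_ + _).
    by case: (v == c) => //; rewrite big1.
  move=> l lL; rewrite weight_bumpf //; first by case: (hleaf l lL).
  exact: lc.
have wc : weight e f c = W.
  rewrite wf eqxx (negbTE cL) add0r sumy (weight_one (A := A :\: L) (p := p)) //.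
    by rewrite /W -/x addrA addrAC.
  move=> u /setDP[uA uL] ecu; case: (hc u uA ecu) => // uL'.
  by rewrite uL' in uL.
have wl : forall l, l \in L -> weight e f l = y l.
  move=> l lL; rewrite wf lL (negbTE (lc l lL)) addr0 (weight_out hsupp) ?add0r //.
  by rewrite inE lL.
have wo : forall v, v \notin L -> v != c -> weight e f v = weight e f'' v.
  by move=> v vL vc; rewrite wf (negbTE vL) (negbTE vc) !addr0.
have key : forall l, l \in L -> f [set l; c] = y l.
  move=> l lL; rewrite /f (f_out _ hsupp) ?inE ?lL // add0r (bigD1 l) //= /bumpf eqxx.
  rewrite big1 ?addr0 // => k /andP[kL nkl]; rewrite set2_eqE ?lc //.
  by rewrite eq_sym (negbTE nkl) (negbTE (lc l lL)).
have key2 : forall u v, u \notin L -> v \notin L -> f [set u; v] = f'' [set u; v].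
  move=> u v uL vL; rewrite /f big1 ?addr0 // => l lL; rewrite /bumpf set2_eqE ?lc //.
  have -> : (u == l) = false by apply: contraNF uL => /eqP ->.
  have -> : (v == l) = false by apply: contraNF vL => /eqP ->.
  by rewrite !andbF.
have Hleaf : forall l, l \in L -> weight e f l != weight e f c.
  move=> l lL; rewrite wl // wc /y; case: ifP => _; rewrite eq_sym //.
have Hcp : weight e f c != weight e f p.
  have pc : p != c by apply: contraTneq ecp => ->; rewrite ei.
  by rewrite wc wo.
exists f; split.
- move=> S; rewrite /f; have [E|nf] := eqVneq (f'' S) 0.
    rewrite E add0r => hS.
    case: (pickP [pred l | (l \in L) && (S == [set l; c])]).
      move=> l /andP[lL /eqP ->]; exists l, c; split => //; first exact: LA'.
      by case: (hleaf l lL).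
    move=> H; move: hS; rewrite big1 ?eqxx // => l lL; rewrite /bumpf.
    by move: (H l) => /=; rewrite lL /= => ->.
  move=> _; case: (hsupp S nf) => u [v [-> /setDP[uA _] /setDP[vA _] euv]].
  by exists u, v.
- move=> u v uA vA euv.
  have [uL|uL] := boolP (u \in L).
    case: (hleaf u uL) => _ /(_ v vA euv) ->; rewrite key //.
  have [vL|vL] := boolP (v \in L).
    case: (hleaf v vL) => _ /(_ u uA); rewrite es => /(_ euv) ->.
    by rewrite setUC key.
  by rewrite key2 // hnz // inE ?uL ?vL ?uA ?vA.
- move=> u v uA vA euv.
  have [uL|uL] := boolP (u \in L).
    by case: (hleaf u uL) => _ /(_ v vA euv) ->; apply: Hleaf.
  have [vL|vL] := boolP (v \in L).
    case: (hleaf v vL) => _ /(_ u uA); rewrite es => /(_ euv) ->.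
    by rewrite eq_sym; apply: Hleaf.
  have [uc|uc] := eqVneq u c.
    rewrite uc in euv *; case: (hc v vA euv) => [->|]; first exact: Hcp.
    by rewrite (negbTE vL).
  have [vc|vc] := eqVneq v c.
    rewrite vc es in euv *; case: (hc u uA euv) => [->|]; last by rewrite (negbTE uL).
    by rewrite eq_sym; apply: Hcp.
  by rewrite !wo //; apply: hw => //; rewrite inE ?uL ?vL.
Qed.

Definition nice (T : finType) (e : rel T) (A : {set T}) :=
  forall u v, u \in A -> v \in A -> e u v ->
    exists w, w \in A /\ ((e u w /\ w != v) \/ (e v w /\ w != u)).

Lemma nice_closed (T : finType) (e : rel T) (A A' : {set T}) : nice e A ->
  (forall u, u \in A' -> u \in A) ->
  (forall u w, u \in A' -> w \in A -> e u w -> w \in A') -> nice e A'.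
Proof.
move=> hn sub cl u v uA vA euv.
have [w [wA [[euw nwv]|[evw nwu]]]] := hn u v (sub u uA) (sub v vA) euv.
  by exists w; split; [apply: (cl u) | left].
by exists w; split; [apply: (cl v) | right].
Qed.

Lemma zero_good (T : finType) (e : rel T) (G : zmodType) (A : {set T}) :
  (forall u v, u \in A -> v \in A -> e u v -> False) ->
  exists f : {set T} -> G, goodA e A f.
Proof.
move=> H; exists (fun _ => 0); split.
- by move=> S; rewrite eqxx.
- by move=> u v uA vA euv; case: (H u v uA vA euv).
- by move=> u v uA vA euv; case: (H u v uA vA euv).
Qed.

Lemma card_lt (T : finType) (A B : {set T}) (a : T) : a \in A -> a \in B ->
  (#|A :\: B| < #|A|)%N.
Proof.
move=> aA aB; rewrite -(cardsID B A).
have : (0 < #|A :&: B|)%N by apply/card_gt0P; exists a; rewrite inE aA aB.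
lia.
Qed.

Lemma main_ind (T : finType) (e : rel T) (G : finZmodType) :
  symmetric e -> irreflexive e -> acyclic_graph e -> #|G| = 4%N ->
  forall n (A : {set T}), (#|A| <= n)%N -> nice e A ->
  exists f : {set T} -> G, goodA e A f.
Proof.
move=> es ei acyc hG; elim=> [|n IH] A hA hn.
  apply: zero_good => u v uA; move: hA; rewrite leqn0 => /eqP/cards0_eq A0.
  by rewrite A0 inE in uA.
case: (pickP [pred ab : T * T | [&& ab.1 \in A, ab.2 \in A & e ab.1 ab.2]]); last first.
  move=> H; apply: zero_good => u v uA vA euv.
  by move: (H (u, v)); rewrite /= uA vA euv.
case=> a b /and3P[/= aA bA eab].
have [c [l0 [p [cA l0A ecl0 lf0 hc]]]] := structure es ei acyc aA bA eab.
have l0c : l0 != c by apply: contraTneq ecl0 => ->; rewrite ei.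
have [pn|pn] := boolP [&& p \in A, e c p & [exists q in A, e p q && (q != c)]].
-
  case/and3P: pn => pA ecp /exists_inP[q qA /andP[epq nqc]].
  pose L := [set u in A | e c u && (u != p)].
  have memL : forall u, (u \in L) = [&& u \in A, e c u & u != p] by move=> u; rewrite inE.
  clearbody L.
  have pc : p != c by apply: contraTneq ecp => ->; rewrite ei.
  have l0p : l0 != p.
    by apply/eqP => E; rewrite E in lf0; move/eqP: nqc; apply; apply: lf0.
  have l0L : l0 \in L by rewrite memL l0A ecl0 l0p.
  have leafL : forall l, l \in L -> e l c /\ leafA e A l c.
    move=> l; rewrite memL => /and3P[lA ecl nlp]; split; first by rewrite es.
    by case: (hc l lA ecl) => // E; rewrite E eqxx in nlp.
  have qL : q \notin L.
    apply/negP => /leafL [_ /(_ p pA)]; rewrite es => /(_ epq) E.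
    by rewrite E eqxx in pc.
  have hA' : (#|A :\: L| <= n)%N.
    by have := card_lt l0A l0L; move: hA; clear; lia.
  have hn' : nice e (A :\: L).
    move=> u v /setDP[uA uL] /setDP[vA vL] euv.
    have [w [wA H]] := hn u v uA vA euv.
    have [wL|wL] := boolP (w \in L); last by exists w; rewrite inE wL wA.
    case: (leafL w wL) => _ lw.
    case: H => [[euw nwv]|[evw nwu]].
      have uc : u = c by apply: lw => //; rewrite es.
      have vp : v = p.
        case: (hc v vA); first by rewrite -uc.
          by [].
        move=> lv; rewrite memL vA -uc euv andTb /= in vL.
        by move/negPn/eqP: vL.
      exists q; split; first by rewrite inE qL qA.
      by right; rewrite vp epq uc.
    have vc : v = c by apply: lw => //; rewrite es.
    have up : u = p.
      rewrite memL uA -vc es euv /= in uL; by move/negPn/eqP: uL.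
    exists q; split; first by rewrite inE qL qA.
    by left; rewrite up epq vc.
  have [f' [hs hnz hw]] := IH _ hA' hn'.
  apply: (step es ei hG (A := A) (L := L) (c := c) (l1 := l0) (p := p) (f'' := f')) => //.
  + by apply/subsetP => u; rewrite memL => /andP[].
  + by rewrite memL ei andbF.
  + by rewrite memL eqxx !andbF.
  + move=> u uA ecu; have [->|up] := eqVneq u p; first by left.
    by right; rewrite memL uA ecu up.
  + by move=> u v uA vA euv _ _; apply: hw.
-
  pose L := [set u in A | e c u && (u != l0)].
  have memL : forall u, (u \in L) = [&& u \in A, e c u & u != l0] by move=> u; rewrite inE.
  clearbody L.
  have leafL : forall l, l \in L -> e l c /\ leafA e A l c.
    move=> l; rewrite memL => /and3P[lA ecl nll0]; split; first by rewrite es.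
    case: (hc l lA ecl) => // E; rewrite E in lA ecl *.
    move=> w wA epw; apply/eqP; apply: contraR pn => nwc.
    by rewrite lA ecl /=; apply/exists_inP; exists w; rewrite // epw.
  have [l1 l1L] : exists l1, l1 \in L.
    have [w [wA [[ecw nwl]|[elw nwc]]]] := hn c l0 cA l0A ecl0.
      by exists w; rewrite memL wA ecw nwl.
    by rewrite (lf0 w wA elw) eqxx in nwc.
  have cL : c \notin L by rewrite memL ei andbF.
  have l0L : l0 \notin L by rewrite memL eqxx !andbF.
  pose B := c |: (l0 |: L).
  have memB : forall u, (u \in B) = [|| u == c, u == l0 | u \in L].
    by move=> u; rewrite /B !inE.
  clearbody B.
  have hA' : (#|A :\: B| <= n)%N.
    have := @card_lt _ A B c cA; rewrite memB eqxx => /(_ isT).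
    move: hA; clear; lia.
  have cl : forall u w, u \in A :\: B -> w \in A -> e u w -> w \in A :\: B.
    move=> u w /setDP[uA uB] wA euw; rewrite inE wA andbT.
    move: uB; rewrite memB => /norP[nuc /norP[nul0 nuL]].
    rewrite memB; apply/negP => /or3P[/eqP wc|/eqP wl0|wL].
    - rewrite wc es in euw.
      by rewrite memL uA euw nul0 in nuL.
    - by rewrite wl0 in euw; move/eqP: nuc; apply; apply: lf0 => //; rewrite es.
    - by case: (leafL w wL) => _ /(_ u uA); rewrite es => /(_ euw) E; rewrite E eqxx in nuc.
  have hn' : nice e (A :\: B).
    by apply: (nice_closed hn) => // u /setDP[].
  have [f' [hs hnz hw]] := IH _ hA' hn'.
  have [x [nx _ _]] := avoid3 (0 : G) 0 0 (ltac:(by rewrite hG)).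
  pose f'' := fun S => f' S + bumpf l0 c x S.
  have notB : forall u, u \in A :\: L -> u != c -> u != l0 -> u \in A :\: B.
    move=> u /setDP[uA uL] uc ul0; rewrite inE uA andbT memB.
    by rewrite negb_or uc negb_or ul0.
  have subBL : forall u, u \in A :\: B -> u \in A :\: L.
    move=> u /setDP[uA uB]; rewrite inE uA andbT; apply: contra uB => uL.
    by rewrite memB uL !orbT.
  have cB : c \notin A :\: B by rewrite inE memB eqxx.
  have nbu : forall u v, u != c -> u != l0 -> bumpf l0 c x [set u; v] = 0.
    move=> u v uc ul0; rewrite /bumpf set2_eqE //.
    by rewrite (negbTE uc) (negbTE ul0).
  have fl0c : f'' [set l0; c] = x.
    by rewrite /f'' setUC (f_out _ hs cB) add0r /bumpf setUC eqxx.
  have fcl0 : f'' [set c; l0] = x by rewrite setUC.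
  have nbr : forall u, u \in A :\: L -> e c u -> u = l0.
    move=> u /setDP[uA uL] ecu; apply/eqP; apply: contraNT uL => ul0.
    by rewrite memL uA ecu ul0.
  have nbl : forall u, u \in A :\: L -> e l0 u -> u = c.
    by move=> u /setDP[uA _] elu; apply: lf0.
  apply: (step es ei hG (A := A) (L := L) (c := c) (l1 := l1) (p := l0) (f'' := f'')) => //.
  + by apply/subsetP => u; rewrite memL => /andP[].
  + move=> u uA ecu; have [->|ul] := eqVneq u l0; first by left.
    by right; rewrite memL uA ecu ul.
  + move=> S; rewrite /f''; have [E|nf] := eqVneq (f' S) 0.
      rewrite E add0r /bumpf; case: (S =P [set l0; c]) => [-> _|_]; last by rewrite eqxx.
      by exists l0, c; rewrite !inE l0A cA l0L cL es ecl0.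
    move=> _; case: (hs S nf) => u [v [-> uB vB euv]].
    by exists u, v; split=> //; apply: subBL.
  + move=> u v uAL vAL euv.
    have [uc|uc] := eqVneq u c.
      by rewrite uc in euv *; rewrite (nbr v vAL euv) fcl0.
    have [ul|ul] := eqVneq u l0.
      by rewrite ul in euv *; rewrite (nbl v vAL euv) fl0c.
    have [vc|vc] := eqVneq v c.
      by rewrite vc es in euv *; rewrite (nbr u uAL euv) fl0c.
    have [vl|vl] := eqVneq v l0.
      by rewrite vl es in euv *; rewrite (nbl u uAL euv) fcl0.
    by rewrite /f'' nbu // addr0; apply: hnz => //; apply: notB.
  + move=> u v uAL vAL euv uc vc.
    have ul : u != l0.
      by apply/eqP => ul; rewrite ul in euv; rewrite (nbl v vAL euv) eqxx in vc.
    have vl : v != l0.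
      by apply/eqP => vl; rewrite vl es in euv; rewrite (nbl u uAL euv) eqxx in uc.
    have elc : e l0 c by rewrite es.
    rewrite /f'' !weight_add !(weight_bumpf _ _ es elc l0c) (negbTE uc) (negbTE vc).
    rewrite (negbTE ul) (negbTE vl) !addr0; apply: hw => //; apply: notB => //.
Qed.

Lemma avoid2 (G : finType) (a b : G) : (2 < #|G|)%N ->
  exists w, w != a /\ w != b.
Proof.
move=> h; case: (pickP [pred w | (w != a) && (w != b)]).
  by move=> w /andP[*]; exists w.
move=> H; have : (#|G| <= #|[:: a; b]|)%N.
  apply: subset_leq_card; apply/subsetP => w _.
  by move: (H w) => /=; rewrite !inE; case: eqP; case: eqP.
by move=> /leq_trans /(_ (card_size _)); rewrite leqNgt h.
Qed.

Lemma cross (T : finType) (e : rel T) (S : pred T) x p :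
  path e x p -> S x -> ~~ S (last x p) -> exists a b, [/\ S a, ~~ S b & e a b].
Proof.
elim: p x => [|y p IH] x /=; first by move=> _ ->.
move=> /andP[exy hp] Sx; have [Sy|Sy] := boolP (S y).
  by apply: IH.
by move=> _; exists x, y.
Qed.

Lemma tree_nice (T : finType) (e : rel T) : connected_graph e -> (3 <= #|T|)%N ->
  nice e [set: T].
Proof.
move=> hc h3 u v _ _ euv.
have [z [zu zv]] := avoid2 u v h3.
case/connectP: (hc u z) => p hp zl.
have := @cross T e (fun w => (w == u) || (w == v)) u p hp.
rewrite /= eqxx -zl (negbTE zu) (negbTE zv) => /(_ isT isT) [a [b [Sa Sb eab]]].
move: Sb; rewrite negb_or => /andP[bu bv].
exists b; split; first by rewrite inE.
by case/orP: Sa => /eqP E; rewrite E in eab; [left | right].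
Qed.

Theorem corollary4 (T : finType) (e : rel T) :
  is_tree e -> (3 <= #|T|)%N ->
  exists k : nat, [/\ (0 < k)%N, (k <= 4)%N & group_sum_good e k].
Proof.
case=> [[es ei] hc acyc] h3; exists 4%N; split; [exact: isT | exact: isT |].
move=> G hG.
have [f [_ hnz hw]] := main_ind es ei acyc hG (leqnn #|[set: T]|) (tree_nice hc h3).
exists f; split.
- by move=> u v euv; apply: hnz; rewrite ?inE.
- by move=> u v euv; apply: hw; rewrite ?inE.
Qed.
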